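(* Let $G=(V,E)$ be a graph. For every $v\in V$ the relation $\prec_v$ on $V$ is a strict weak order, i.e., it is irreflexive and transitive and incomparability with respect to $\prec_v$ is transitive.
   Context: Graphs are finite, simple, undirected, with nonempty vertex set. A module of $G=(V,E)$ is a nonempty $M\subseteq V$ such that every $u\in V\setminus M$ is adjacent either to all or to none of the vertices of $M$. For $v,w\in V$, $M_{v,w}$ is the intersection of all modules of $G$ containing both $v$ and $w$. For $v\in V$, the relation $\prec_v$ on $V$ is defined by $w_1\prec_v w_2$ iff $M_{v,w_2}\subsetneq M_{v,w_1}$. Elements $a,b$ are incomparable w.r.t. $\prec_v$ if neither $a\prec_v b$ nor $b\prec_v a$. *)

(* Defs.v *)
From mathcomp Require Import all_boot.
Set Implicit Arguments. Unset Strict Implicit. Unset Printing Implicit Defensive.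

(* A finite simple graph: vertex type T : finType, adjacency e : rel T
   assumed symmetric and irreflexive (hypotheses in the theorem). *)

Definition is_module (T : finType) (e : rel T) (M : {set T}) : bool :=
  (M != set0) &&
  [forall u in ~: M, [forall x in M, e u x] || [forall x in M, ~~ e u x]].

Definition Mvw (T : finType) (e : rel T) (v w : T) : {set T} :=
  \bigcap_(M : {set T} | is_module e M && (v \in M) && (w \in M)) M.

Definition precv (T : finType) (e : rel T) (v w1 w2 : T) : bool :=
  Mvw e v w2 \proper Mvw e v w1.

Definition incomparable (T : finType) (e : rel T) (v a b : T) : bool :=
  ~~ precv e v a b && ~~ precv e v b a.

(* Main.v *)
Require Import Defs.
From mathcomp Require Import all_boot.
Set Implicit Arguments. Unset Strict Implicit.

Lemma mod_uni (T : finType) (e : rel T) (M : {set T}) v u x :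
  is_module e M -> v \in M -> u \notin M -> x \in M -> e u x = e u v.
Proof.
case/andP=> _ /forall_inP H vM uM xM.
have := H u; rewrite in_setC uM => /(_ isT) /orP[/forall_inP A|/forall_inP A].
  by rewrite !A.
by rewrite (negbTE (A x xM)) (negbTE (A v vM)).
Qed.

Lemma uni_mod (T : finType) (e : rel T) (M : {set T}) v :
  v \in M -> (forall u x, u \notin M -> x \in M -> e u x = e u v) -> is_module e M.
Proof.
move=> vM H; apply/andP; split; first by apply/set0Pn; exists v.
apply/forall_inP => u; rewrite in_setC => uM.
case Euv: (e u v).
  by apply/orP; left; apply/forall_inP => x xM; rewrite H.
by apply/orP; right; apply/forall_inP => x xM; rewrite H // Euv.
Qed.

Lemma Mvw_min (T : finType) (e : rel T) v w M :
  is_module e M -> v \in M -> w \in M -> Mvw e v w \subset M.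
Proof. by move=> mM vM wM; rewrite /Mvw; apply: bigcap_inf; rewrite mM vM wM. Qed.

Lemma Mvw_v (T : finType) (e : rel T) v w : v \in Mvw e v w.
Proof. by apply/bigcapP => M /andP[/andP[]]. Qed.

Lemma Mvw_w (T : finType) (e : rel T) v w : w \in Mvw e v w.
Proof. by apply/bigcapP => M /andP[/andP[]]. Qed.

Lemma Mvw_mod (T : finType) (e : rel T) v w : is_module e (Mvw e v w).
Proof.
apply: (uni_mod (v:=v)) (Mvw_v e v w) _ => u x uM xM.
case: (pickP [pred M : {set T} | is_module e M && (v \in M) && (w \in M) && (u \notin M)])
  => [M /= /andP[/andP[/andP[mM vM] wM] uM'] | none].
  apply: (mod_uni mM vM uM'). by move/bigcapP: xM; apply; rewrite mM vM wM.
case/negP: uM; apply/bigcapP => M PM; have := none M; rewrite /= PM /=.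
by move/negbT; rewrite negbK.
Qed.

Lemma key (T : finType) (e : rel T) (e_sym : symmetric e) v a b c :
  precv e v c a -> ~~ precv e v a b -> ~~ precv e v b a ->
  ~~ precv e v b c -> ~~ precv e v c b -> False.
Proof.
rewrite /precv => AC nBA nAB nCB nBC.
set A := Mvw e v a in AC nBA nAB *; set B := Mvw e v b in nBA nAB nCB nBC *.
set C := Mvw e v c in AC nCB nBC *.
have mA : is_module e A := Mvw_mod e v a.
have mB : is_module e B := Mvw_mod e v b.
have mC : is_module e C := Mvw_mod e v c.
have vA : v \in A := Mvw_v e v a. have aA : a \in A := Mvw_w e v a.
have vB : v \in B := Mvw_v e v b. have bB : b \in B := Mvw_w e v b.
have vC : v \in C := Mvw_v e v c. have cC : c \in C := Mvw_w e v c.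
have sAC : A \subset C by case/andP: AC.
have aB : a \notin B.
  apply/negP => aB; have sAB : A \subset B by apply: Mvw_min.
  case: (eqVneq A B) => [EAB | nAB'].
    by move: nBC; rewrite -EAB AC.
  by move: nAB; rewrite properEneq nAB' sAB.
have bC : b \notin C.
  apply/negP => bC; have sBC : B \subset C by apply: Mvw_min.
  case: (eqVneq B C) => [EBC | nBC'].
    by move: nAB; rewrite EBC AC.
  by move: nBC; rewrite properEneq nBC' sBC.
have cA : c \notin A.
  apply/negP => cA; have sCA : C \subset A by apply: Mvw_min.
  by move: AC; rewrite properE sCA andbF.
pose C' := C :\: (A :\: B).
have mC' : is_module e C'.
  apply: (uni_mod (v:=v)); first by rewrite !inE vC vB.
  move=> u x uC' xC'.
  have xC : x \in C by move: xC'; rewrite !inE => /andP[].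
  case uC: (u \in C); last by apply: (mod_uni mC vC); rewrite ?uC.
  have /andP[uB uA] : (u \notin B) && (u \in A).
    by move: uC'; rewrite !inE uC andbT negbK.
  case xB: (x \in B); first by apply: (mod_uni mB vB).
  have xA : x \notin A by move: xC'; rewrite !inE xB /=; case: (x \in A).  
  have uCC : u \in C by rewrite uC.
  rewrite e_sym (mod_uni mA vA xA uA) -(mod_uni mB vB (negbT xB) bB).
  rewrite e_sym (mod_uni mC vC bC xC) -(mod_uni mC vC bC uCC) e_sym.
  exact: (mod_uni mB vB uB bB).
have sCC' : C \subset C'.
  by apply: Mvw_min => //; rewrite /C' !inE ?cC ?vC ?vB ?(negbTE cA) ?andbF.
have : a \in C' by apply: (subsetP sCC'); apply: (subsetP sAC).
by rewrite !inE aA aB.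
Qed.

Theorem lemma3p13 (T : finType) (e : rel T)
  (e_sym : symmetric e) (e_irr : irreflexive e) (v : T) :
  (forall w, ~~ precv e v w w) /\
  (forall a b c, precv e v a b -> precv e v b c -> precv e v a c) /\
  (forall a b c, incomparable e v a b -> incomparable e v b c ->
     incomparable e v a c).
Proof.
split; first by move=> w; rewrite /precv properxx.
split; first by move=> a b c; rewrite /precv => H1 H2; exact: proper_trans H2 H1.
move=> a b c /andP[ab ba] /andP[bc cb]; apply/andP; split; apply/negP => H.
  exact: (key e_sym H cb bc ba ab).
exact: (key e_sym H ab ba bc cb).
Qed.
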